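(* Let $G$ be a group with a subgroup $\Gamma$ of index $m$ and a subgroup $H\lhd\Gamma$ of cardinality $d$ such that $\Gamma/H$ is abelian, and let $F=(F_n)_{n=1}^\infty$ be a left-Følner sequence for $G$. Then $\textup{cr}_F(G)\ge\frac{1}{m^2d}$.
   Context: $F$ is a left-Følner sequence if each $F_n$ is a finite subset of $G$ and $|xF_n\triangle F_n|/|F_n|\to0$ for every $x\in G$. With $\mathcal{C}(G)$ the set of conjugacy classes of $G$, $\textup{cr}_F(G)=\limsup_{n\to\infty}\frac{|\{C\in\mathcal{C}(G):C\cap F_n\ne\varnothing\}|}{|F_n|}$. *)

(* Defs.v *)
From HB Require Import structures.
From mathcomp Require Import all_boot all_order all_algebra finmap.
From mathcomp Require Import all_classical all_reals all_analysis.

Set Implicit Arguments.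
Unset Strict Implicit.
Unset Printing Implicit Defensive.

Import Order.TTheory GRing.Theory Num.Theory.

Local Open Scope classical_set_scope.
Local Open Scope ring_scope.

Section Defs.
Variable G : groupType.

Definition is_subgroup (S : set G) : Prop :=
  S 1%g /\ (forall x y, S x -> S y -> S (x * y^-1)%g).

Definition lcoset (g : G) (S : set G) : set G := [set (g * s)%g | s in S].

Definition has_index (Gamma : set G) (m : nat) : Prop :=
  ([set lcoset g Gamma | g in [set: G]] #= `I_m)%card.

Definition has_card (S : set G) (d : nat) : Prop := (S #= `I_d)%card.

Definition normal_in (H Gamma : set G) : Prop :=
  is_subgroup H /\ H `<=` Gamma /\ (forall g h, Gamma g -> H h -> H (h ^ g)%g).

(* Gamma/H is abelian: cosets (aH)(bH) = (ab)H commute *)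
Definition quotient_abelian (Gamma H : set G) : Prop :=
  forall a b, Gamma a -> Gamma b -> lcoset (a * b)%g H = lcoset (b * a)%g H.

Definition ltrans (x : G) (F : {fset G}) : {fset G} := [fset (x * y)%g | y in F]%fset.

Definition symdiff (A B : {fset G}) : {fset G} := ((A `\` B) `|` (B `\` A))%fset.

Definition left_Folner (R : realType) (F : nat -> {fset G}) : Prop :=
  (forall n, F n != fset0) /\
  forall x : G,
    let u : R ^nat := fun n =>
      (#|` symdiff (ltrans x (F n)) (F n)|)%:R / (#|` F n|)%:R in
    (u @ \oo --> 0)%classic.

Definition conjclass (x : G) : set G := [set (x ^ g)%g | g in [set: G]].

Definition nclasses_meeting (F : {fset G}) : nat :=
  #|` [fset conjclass x | x in F]%fset |.

Definition cr (R : realType) (F : nat -> {fset G}) : \bar R :=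
  limn_esup (fun n => ((nclasses_meeting (F n))%:R / (#|` F n|)%:R : R)%:E).

End Defs.

(* Main.v *)
Require Import Defs.
From HB Require Import structures.
From mathcomp Require Import all_boot all_order all_algebra finmap.
From mathcomp Require Import all_classical all_reals all_analysis.
Import Order.TTheory GRing.Theory Num.Theory.
Local Open Scope classical_set_scope.
Local Open Scope ring_scope.
From mathcomp Require Import zify.

Lemma card_enum_fun (T : choiceType) (x0 : T) (A : set T) n :
  (A #= `I_n)%card -> exists h : nat -> T, forall a, A a -> exists2 i, (i < n)%N & a = h i.
Proof.
move/pcard_eqP => [f].
exists (fun i => xget x0 [set a | A a /\ f a = i]) => a Aa.
have fa : `I_n (f a) by apply: (@funS _ _ _ _ f).
exists (f a) => //.
have := xgetPex x0 (ex_intro _ a (conj Aa erefl) : exists b, [set a0 | A a0 /\ f a0 = f a] b).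
move=> [Ax fx]; apply: (@inj _ _ _ f) => //; by rewrite inE.
Qed.

Section Grp.
Variables (G : groupType) (Gamma H : set G).
Hypothesis sG : is_subgroup Gamma.
Hypothesis nH : normal_in H Gamma.
Hypothesis qa : quotient_abelian Gamma H.

Lemma sg1 : Gamma 1%g. Proof. by case: sG. Qed.
Lemma sgV x : Gamma x -> Gamma (x^-1)%g.
Proof. by move=> Gx; case: sG => G1 GM; have := GM _ _ G1 Gx; rewrite mul1g. Qed.
Lemma sgM x y : Gamma x -> Gamma y -> Gamma (x * y)%g.
Proof. by move=> Gx Gy; case: sG => G1 GM; have := GM _ _ Gx (sgV _ Gy); rewrite invgK. Qed.

Lemma class_decomp (m d : nat) (gi hj : nat -> G) :
  (forall g, exists2 i, (i < m)%N & Gamma ((gi i)^-1 * g)%g) ->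
  (forall h, H h -> exists2 j, (j < d)%N & h = hj j) ->
  forall a, Gamma a -> exists2 i, (i < m)%N & exists2 j, (j < d)%N &
    a = ((xget 1%g (conjclass a)) ^ gi i * hj j)%g.
Proof.
move=> hgi hhj a Ga.
set r := xget 1%g (conjclass a).
have : conjclass a r.
  apply: xgetPex; exists a; exists 1%g => //; by rewrite conjg1.
move=> [g0 _ rE].
have aE : a = (r ^ g0^-1)%g by rewrite -rE conjgK.
have [i im Gc] := hgi (g0^-1)%g.
set c := ((gi i)^-1 * g0^-1)%g in Gc.
have gE : (g0^-1 = gi i * c)%g by rewrite /c mulVKg.
exists i => //.
set b := (r ^ gi i)%g.
have abE : a = (b ^ c)%g by rewrite aE gE conjgM.
have Gb : Gamma b.
  have -> : b = (a ^ c^-1)%g by rewrite abE conjgK.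
  rewrite conjgE invgK; apply: sgM => //; apply: sgM => //; exact: sgV.
have := qa _ _ Gb Gc.
have : lcoset (b * c)%g H (b * c)%g.
  by exists 1%g; [case: nH => [[]] | rewrite mulg1].
move=> + E; rewrite E => -[h Hh hE].
have [j jd hjE] := hhj h Hh.
exists j => //.
rewrite -/b -hjE abE conjgE -hE -mulgA mulKg //.
Qed.

Lemma count_classes (m d : nat) (gi hj : nat -> G) (A : {fset G}) :
  (forall g, exists2 i, (i < m)%N & Gamma ((gi i)^-1 * g)%g) ->
  (forall h, H h -> exists2 j, (j < d)%N & h = hj j) ->
  (forall a, a \in A -> Gamma a) ->
  (#|` A| <= #|` [fset conjclass x | x in A]%fset| * m * d)%N.
Proof.
move=> hgi hhj GA.
set P := [fset conjclass x | x in A]%fset.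
set s1 := [seq (C, i) | C <- enum_fset P, i <- iota 0 m].
set s := [seq ((xget 1%g p.1) ^ gi p.2 * hj j)%g | p <- s1, j <- iota 0 d].
have -> : (#|` P| * m * d = size s)%N by rewrite /s /s1 !size_allpairs !size_iota.
apply: uniq_leq_size; first exact: fset_uniq.
move=> a aA.
have [i im [j jd aE]] := @class_decomp m d gi hj hgi hhj a (GA a aA).
apply/allpairsP; exists ((conjclass a, i), j); split => //=; last by rewrite mem_iota.
apply/allpairsP; exists (conjclass a, i); split => //=; last by rewrite mem_iota.
by apply/imfsetP; exists a.
Qed.

Lemma count_cosets (m : nat) (gi : nat -> G) (F : {fset G}) :
  (forall g, exists2 i, (i < m)%N & Gamma ((gi i)^-1 * g)%g) ->
  (#|` F| <= m * #|` [fset y in F | `[< Gamma y >]]%fset|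
     + \sum_(i < m) #|` symdiff (ltrans (gi i)^-1 F) F|)%N.
Proof.
move=> hgi.
set FG := [fset y in F | `[< Gamma y >]]%fset.
pose Fi i := [fset y in F | `[< Gamma ((gi i)^-1 * y)%g >]]%fset.
have hFi i : (#|` Fi i| <= #|` FG| + #|` symdiff (ltrans (gi i)^-1 F) F|)%N.
  set x := ((gi i)^-1)%g.
  rewrite -(size_map (fun y => x * y)%g).
  apply: (leq_trans _ (leq_card_fsetU _ _)).
  apply: uniq_leq_size; first by rewrite (map_inj_uniq (mulgI x)) // fset_uniq.
  move=> z /mapP [y yFi ->].
  move: yFi; rewrite in_fset /= => /andP [yF /asboolP Gy].
  have zxF : (x * y)%g \in ltrans x F by rewrite /ltrans; apply/imfsetP; exists y.
  rewrite in_fsetU; case: (boolP ((x * y)%g \in F)) => zF.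
    by rewrite /FG in_fset; apply/orP; left; apply/andP; split => //; apply/asboolP.
  by apply/orP; right; rewrite /symdiff in_fsetU !in_fsetD zF zxF.
have h1 : (#|` F| <= \sum_(i < m) #|` Fi i|)%N.
  rewrite -(big_mkord xpredT (fun i => #|` Fi i|)) /index_iota subn0.
  have -> : (\sum_(i <- iota 0 m) #|` Fi i| = size (flatten [seq enum_fset (Fi i) | i <- iota 0 m]))%N.
    by rewrite size_flatten /shape -map_comp sumnE big_map.
  apply: uniq_leq_size; first exact: fset_uniq.
  move=> y yF; apply/flattenP.
  have [i im Gy] := hgi y.
  exists (enum_fset (Fi i)); first by apply/mapP; exists i; rewrite ?mem_iota.
  by rewrite in_fset; apply/andP; split => //; apply/asboolP.
apply: (leq_trans h1).
have h2 : (\sum_(i < m) #|` Fi i| <= \sum_(i < m) (#|` FG| + #|` symdiff (ltrans (gi i)^-1 F) F|))%N.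
  by apply: leq_sum => i _; exact: hFi.
apply: (leq_trans h2).
by rewrite big_split /= sum_nat_const card_ord.
Qed.
End Grp.
Theorem proposition1p25 (R : realType) (G : groupType) (Gamma H : set G)
    (m d : nat) (F : nat -> {fset G}) :
  is_subgroup Gamma -> has_index Gamma m ->
  normal_in H Gamma -> has_card H d ->
  quotient_abelian Gamma H ->
  left_Folner R F ->
  ((1 / (m ^ 2 * d)%:R : R)%:E <= cr R F)%E.
Proof.
move=> sG hidx nH hcard qa [hne hfol].
have [hc hhc] := @card_enum_fun _ set0 _ _ hidx.
pose gi i := xget 1%g (hc i).
have hgi : forall g, exists2 i, (i < m)%N & Gamma ((gi i)^-1 * g)%g.
  move=> g.
  have : [set lcoset g Gamma | g in [set: G]] (lcoset g Gamma) by exists g.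
  move=> /hhc [i im ci].
  have gc : hc i g by rewrite -ci; exists 1%g; [case: sG | rewrite mulg1].
  have := xgetPex 1%g (ex_intro _ g gc); rewrite -/(gi i) -ci => -[c Gc cE].
  exists i => //; rewrite -cE.
  have -> : ((g * c)^-1 * g = c^-1)%g by apply: (@mulgI _ (g * c)%g); rewrite mulVKg mulgK.
  exact: (@sgV _ _ sG).
have [hj hhj] := @card_enum_fun _ 1%g _ _ hcard.
have key n : (#|` F n| <= m ^ 2 * d * nclasses_meeting (F n)
      + \sum_(i < m) #|` symdiff (ltrans (gi i)^-1 (F n)) (F n)|)%N.
  have h1 := @count_cosets _ _ _ _ (F n) hgi.
  set FG := [fset y in F n | `[< Gamma y >]]%fset in h1.
  have GA : forall a, a \in FG -> Gamma a.
    by move=> a; rewrite in_fset => /andP [_ /asboolP].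
  have h2 := @count_classes _ _ _ sG nH qa _ _ _ _ FG hgi hhj GA.
  have h3 : (#|` [fset conjclass x | x in FG]%fset| <= nclasses_meeting (F n))%N.
    apply: fsubset_leq_card; apply/fsubsetP => C /imfsetP [x xFG ->].
    apply/imfsetP; exists x => //; by move: xFG; rewrite in_fset => /andP [].
  have h4 : (#|` FG| <= nclasses_meeting (F n) * m * d)%N.
    by apply: (leq_trans h2); rewrite leq_mul2r leq_mul2r h3 !orbT.
  apply: (leq_trans h1); rewrite leq_add2r.
  have := leq_mul (leqnn m) h4.
  rewrite expnS expn1 => /leq_trans; apply; apply: eq_leq; lia.
pose N n : R := (#|` F n|)%:R.
pose r n : R := (nclasses_meeting (F n))%:R / N n.
pose u (i : 'I_m) n : R := (#|` symdiff (ltrans (gi i)^-1 (F n)) (F n)|)%:R / N n.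
pose e n : R := \sum_(i < m) u i n.
pose k : R := (m ^ 2 * d)%:R.
pose v n : R := (1 - e n) / k.
have hNpos n : 0 < N n by rewrite /N ltr0n cardfs_gt0 hne.
have hv_le n : v n <= r n.
  have eE : e n = (\sum_(i < m) #|` symdiff (ltrans (gi i)^-1 (F n)) (F n)|)%:R / N n.
    by rewrite /e natr_sum mulr_suml.
  have hr0 : 0 <= r n by rewrite /r divr_ge0 // ltW.
  have [k0|kpos] := eqVneq k 0.
    by rewrite /v k0 invr0 mulr0.
  have kgt0 : 0 < k by rewrite lt0r kpos /k ler0n.
  rewrite /v eE ler_pdivrMr //.
  rewrite -(ler_pM2r (hNpos n)) mulrBl mul1r divfK ?gt_eqF //.
  rewrite -mulrA (mulrC k) mulrA divfK ?gt_eqF //.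
  rewrite lerBlDr mulrC /k -natrM -natrD ler_nat.
  exact: key.
have hu i : u i @ \oo --> 0 by exact: (hfol ((gi i)^-1)%g).
have he : e @ \oo --> 0.
  have := @cvg_big _ 'I_m +%R (0 : R) xpredT add_continuous nat \oo (index_enum _)
    (fun i n => u i n) (fun=> 0) _ (fun i _ => hu i).
  by rewrite big1 // => h; apply: h.
have hv : v @ \oo --> (1 - 0) / k.
  by apply: cvgMr_tmp; apply: cvgB => //; exact: cvg_cst.
rewrite subr0 in hv.
have hve : (fun n => (v n)%:E) @ \oo --> (1 / k)%:E.
  by apply: cvg_EFin; [exact: nearW | exact: hv].
rewrite /cr limn_esup_lim.
rewrite -(cvg_lim _ (cvg_esups hve)) //.
apply: lee_lim; [exact: is_cvg_esups | exact: is_cvg_esups |].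
apply: nearW => n.
apply: ge_ereal_sup => _ [j jn <-].
have : sdrop (fun n => (r n)%:E) n (r j)%:E by exists j.
move/ereal_sup_ubound; apply: le_trans; rewrite lee_fin; exact: hv_le.
Qed.
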